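(* Let $K$ be an $\mathbb N$-valued random variable with $\Pr(K=k)=k^{-5/4}/c$ for $k\in\mathbb N$ ($c$ a normalizing constant), and let $(K_i)_{i\in\mathbb N}$ be i.i.d. copies of $K$. Then for almost every realization $(k_i)$ there is $i_0$ such that (1) every record-time $i\geq i_0$ is simple, and (2) $\max\{k_1,\ldots,k_i\}>i$ for all $i\geq i_0$.
   Context: For a sequence $(k_i)_{i\in\mathbb N}$ of natural numbers, $i$ is a record-time if $k_i>k_j$ for all $j<i$, and a non-strict record-time if $k_i\geq k_j$ for all $j<i$. A record-time $i$ is simple if $k_i<k_j$ for every non-strict record-time $j>i$. *)

(* Defs.v *)
From HB Require Import structures.
From mathcomp Require Import all_boot all_order all_algebra.
From mathcomp Require Import all_classical all_reals all_analysis.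
Set Implicit Arguments. Unset Strict Implicit. Unset Printing Implicit Defensive.
Import Order.TTheory GRing.Theory Num.Theory.
Local Open Scope classical_set_scope.
Local Open Scope ring_scope.

(* Records of a sequence k : nat -> nat (indices start at 0). *)
Definition record_time (k : nat -> nat) (i : nat) : Prop :=
  forall j, (j < i)%N -> (k j < k i)%N.

Definition nonstrict_record_time (k : nat -> nat) (i : nat) : Prop :=
  forall j, (j < i)%N -> (k j <= k i)%N.

Definition simple_record_time (k : nat -> nat) (i : nat) : Prop :=
  record_time k i /\
  forall j, (i < j)%N -> nonstrict_record_time k j -> (k i < k j)%N.

Definition zeta54 {R : realType} : R :=
  limn (fun n : nat => \sum_(1 <= k < n) ((k%:R : R) `^ (- (5%:R / 4%:R)))).

Definition law54 {R : realType} (k : nat) : R :=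
  if k == 0%N then 0 else (k%:R : R) `^ (- (5%:R / 4%:R)) / zeta54.

Definition mutually_independent {d} {T : measurableType d} {R : realType}
  (P : probability T R) (X : nat -> T -> nat) : Prop :=
  forall (s : seq nat) (A : nat -> set nat), uniq s ->
    P (\bigcap_(i in [set` s]) (X i @^-1` A i)) =
    (\prod_(i <- s) P (X i @^-1` A i))%E.

(* Main.v *)
Require Import Defs.
From HB Require Import structures.
From mathcomp Require Import all_boot all_order all_algebra.
From mathcomp Require Import all_classical all_reals all_analysis.
From mathcomp Require Import ring lra zify.
Import Order.TTheory GRing.Theory Num.Theory.
Local Open Scope classical_set_scope.
Local Open Scope ring_scope.

Section S.
Variables (R : realType) (d : measure_display) (T : measurableType d)
  (P : probability T R) (K : nat -> T -> nat).
Hypothesis HKmeas : forall i, measurable_fun setT (K i).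
Hypothesis Hindep : mutually_independent P K.
Hypothesis Hlaw : forall i k, P (K i @^-1` [set k]) = (law54 k)%:E.

Let c : R := zeta54.
Let r (k : nat) : R := (k%:R : R) `^ (- (5%:R / 4%:R)).

Lemma mK i (A : set nat) : measurable (K i @^-1` A).
Proof. by rewrite -[X in measurable X]setTI; exact: HKmeas. Qed.

Lemma law_ge0 k : 0 <= law54 k :> R.
Proof. by rewrite -lee_fin -(Hlaw 0) measure_ge0. Qed.

Let L (n : nat) : R := \sum_(k < n) law54 k.

Lemma PL i n : P (K i @^-1` [set x | (x < n)%N]) = (L n)%:E.
Proof.
elim: n => [|n IH].
  rewrite /L big_ord0 (_ : _ @^-1` _ = set0) ?measure0 //.
  by apply/seteqP; split => x //=.
rewrite (_ : _ @^-1` _ = K i @^-1` [set x | (x < n)%N] `|` K i @^-1` [set n]).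
  rewrite measureU ?IH ?Hlaw; last 3 first.
  - exact: mK.
  - exact: mK.
  - by rewrite -subset0 => x [/= h1 h2]; move: h1; rewrite h2 ltnn.
  by rewrite /L big_ord_recr /= EFinD -IH -(Hlaw i n).
apply/seteqP; split => x /=.
- by rewrite ltnS leq_eqVlt => /orP[/eqP ->|h]; [right|left].
- by case=> [h|->] //; apply: ltnW.
Qed.

Lemma L_le1 n : L n <= 1.
Proof. by rewrite -lee_fin -(PL 0) probability_le1 //; exact: mK. Qed.

Lemma L_ge0 n : 0 <= L n.
Proof. by rewrite /L sumr_ge0 // => k _; exact: law_ge0. Qed.

Lemma L_mono m n : (m <= n)%N -> L m <= L n.
Proof.
move=> mn; rewrite /L -(subnKC mn) big_split_ord /= lerDl.
by rewrite sumr_ge0 // => k _; exact: law_ge0.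
Qed.

Lemma c_gt0 : 0 < c.
Proof.
have h1 : law54 1 = c^-1 by rewrite /law54 /= powR1 mul1r.
have : 0 <= c by rewrite -invr_ge0 -h1 law_ge0.
rewrite le_eqVlt => /orP[/eqP c0|//]; exfalso.
have l0 k : law54 k = 0 :> R.
  by rewrite /law54; case: ifP => // _; rewrite -/c -c0 invr0 mulr0.
have : P setT = 0.
  rewrite (_ : setT = \bigcup_(n in setT) (K 0 @^-1` [set n])); last first.
    by apply/seteqP; split => x // _; exists (K 0 x).
  rewrite measure_bigcup //=; last 2 first.
  - by move=> i _; exact: mK.
  - by move=> i j _ _ [x [/= -> ->]].
  by apply: eseries0 => i _ _; rewrite Hlaw l0.
by rewrite probability_setT => /eqP; rewrite onee_eq0.
Qed.

Lemma r_gt0 k : (0 < k)%N -> 0 < r k.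
Proof. by move=> k0; rewrite /r powR_gt0 // ltr0n. Qed.

Lemma rE k : r k = ((k%:R : R) `^ (5%:R / 4%:R))^-1.
Proof. by rewrite /r powRN. Qed.

Lemma r_anti m n : (0 < m <= n)%N -> r n <= r m.
Proof.
case/andP => m0 mn; rewrite !rE lef_pV2 ?posrE ?powR_gt0 ?ltr0n //; last exact: leq_trans mn.
by rewrite ge0_ler_powR ?nnegrE ?ler0n ?ler_nat.
Qed.

Lemma r2 m : (0 < m)%N -> r m <= 4%:R * r (2 * m).
Proof.
move=> m0; rewrite !rE natrM powRM ?ler0n // invfM mulrA.
have e4 : 2%:R `^ 2%:R = 4%:R :> R by rewrite powR_mulrn // expr2 -natrM.
have h2 : 2%:R `^ (5%:R / 4%:R) <= 4%:R :> R.
  by rewrite -[X in _ <= X]e4 ler_powR ?ler1n // ler_pdivrMr // -natrM ler_nat.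
rewrite -[X in X <= _]mul1r ler_wpM2r ?invr_ge0 ?powR_ge0 //.
by rewrite ler_pdivlMr ?mul1r ?powR_gt0.
Qed.

Lemma lawE k : (0 < k)%N -> law54 k = r k / c.
Proof. by rewrite /law54; case: eqP => // ->. Qed.

Lemma tail m : (0 < m)%N -> m%:R * r (2 * m) / c <= L (2 * m) - L m.
Proof.
move=> m0; rewrite /L mul2n -addnn big_split_ord /= addrAC subrr add0r.
have hs : \sum_(i < m) (r (m + m) / c) = m%:R * r (m + m) / c.
  by rewrite sumr_const card_ord -mulrA mulr_natl.
rewrite -hs ler_sum // => k _.
rewrite lawE ?addn_gt0 ?m0 // ler_wpM2r //; first by rewrite invr_ge0 ltW // c_gt0.
by rewrite r_anti // addn_gt0 m0 /= leq_add2l ltnW.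
Qed.

Lemma iota_index n : iota 0 n = index_iota 0 n.
Proof. by rewrite /index_iota subn0. Qed.

Lemma P_allsmall n M :
  P (\bigcap_(l in [set` iota 0 n]) (K l @^-1` [set x | (x < M)%N])) =
  ((L M) ^+ n)%:E.
Proof.
rewrite (Hindep (iota 0 n) (fun _ => [set x | (x < M)%N]) (iota_uniq 0 n)).
under eq_bigr => l _ do rewrite PL.
by rewrite prodEFin iota_index prodr_const_nat subn0.
Qed.

Definition Apair (m i j l : nat) : set nat :=
  if l == i then [set m] else if l == j then [set m] else [set x | (x < m)%N].

Definition Epair (m i j : nat) : set T :=
  \bigcap_(l in [set` iota 0 j.+1]) (K l @^-1` Apair m i j l).

Lemma prod_g (a b : R) (i n : nat) :
  \prod_(0 <= l < n) (if l == i then a else b) =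
  if (i < n)%N then a * b ^+ n.-1 else b ^+ n.
Proof.
elim: n => [|n IH]; first by rewrite big_geq.
rewrite big_nat_recr //= IH.
case: (ltngtP i n) => [lt_in|lt_ni|<-].
- rewrite (ltn_trans lt_in (ltnSn n)).
  by case: n lt_in {IH} => // n _ /=; rewrite -mulrA -exprSr.
  have h2 : (i < n.+1)%N = false by rewrite ltnNge lt_ni.
  by rewrite h2 exprSr.
- by rewrite ltnSn /= mulrC.
Qed.

Lemma P_Epair m i j : (i < j)%N ->
  P (Epair m i j) = ((law54 m) ^+ 2 * (L m) ^+ j.-1)%:E.
Proof.
move=> ij; rewrite /Epair (Hindep (iota 0 j.+1) (Apair m i j) (iota_uniq 0 j.+1)).
have -> : (\prod_(l <- iota 0 j.+1) P (K l @^-1` Apair m i j l))%E =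
  (\prod_(l <- iota 0 j.+1) ((if l == i then law54 m else if l == j then law54 m else L m)%:E))%E.
  apply: eq_bigr => l _; rewrite /Apair.
  by case: ifP => _; [rewrite Hlaw|case: ifP => _; [rewrite Hlaw|rewrite PL]].
rewrite prodEFin iota_index big_nat_recr //= eqxx (gtn_eqF ij).
rewrite (@eq_big_nat _ _ _ 0 j _ (fun l => if l == i then law54 m else L m)); last first.
  by move=> l /andP[_ lj]; rewrite (ltn_eqF lj).
by rewrite prod_g ij expr2 mulrAC.
Qed.

Lemma geom_id (q : R) N : (1 - q) ^+ 2 * \sum_(j < N) (j.+1)%:R * q ^+ j =
  1 - (N.+1)%:R * q ^+ N + N%:R * q ^+ N.+1.
Proof.
elim: N => [|N IH]; first by rewrite big_ord0 mulr0 expr0 mulr1 mul0r addr0 subrr.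
rewrite big_ord_recr /= mulrDr IH !exprS -!nat1r; ring.
Qed.

Lemma geom_bound (q : R) N : 0 <= q < 1 ->
  \sum_(j < N) (j.+1)%:R * q ^+ j <= ((1 - q) ^+ 2)^-1.
Proof.
case/andP => q0 q1.
have h : 0 < (1 - q) ^+ 2 by rewrite exprn_gt0 // subr_gt0.
rewrite -(ler_pM2l h) mulfV ?gt_eqF // geom_id.
have qN : 0 <= q ^+ N by rewrite exprn_ge0.
have N0 : 0 <= N%:R :> R by rewrite ler0n.
rewrite exprS -nat1r.
have : N%:R * (q * q ^+ N) <= N%:R * q ^+ N by rewrite ler_wpM2l // ler_piMl // ltW.
lra.
Qed.

Lemma tele_id N : \sum_(t < N) (((t.+1)%:R * (t.+2)%:R)^-1 : R) = 1 - ((N.+1)%:R)^-1.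
Proof.
elim: N => [|N IH]; first by rewrite big_ord0 invr1 subrr.
rewrite big_ord_recr /= IH.
have h1 : (N.+1)%:R != 0 :> R by rewrite pnatr_eq0.
have h2 : (N.+2)%:R != 0 :> R by rewrite pnatr_eq0.
move: h1 h2; rewrite -!nat1r => h1 h2.
by field; rewrite h1 h2.
Qed.

Lemma nneseries_le_C (u : nat -> R) (C : R) : (forall j, 0 <= u j) ->
  (forall N, \sum_(j < N) u j <= C) -> (\sum_(j <oo) (u j)%:E <= C%:E)%E.
Proof.
move=> u0 hN; apply: lime_le.
  by apply: is_cvg_nneseries => n _ _; rewrite lee_fin.
by apply: nearW => N; rewrite sumEFin lee_fin big_mkord; exact: hN.
Qed.

Lemma BC_finite (F : nat -> set T) (C : R) : 0 <= C ->
  (forall t, (P (F t) <= (C / ((t.+1)%:R * (t.+2)%:R))%:E)%E) ->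
  (\sum_(t <oo) P (F t) < +oo)%E.
Proof.
move=> C0 hF; apply: (le_lt_trans (y := C%:E)); last exact: ltry.
apply: le_trans (@nneseries_le_C (fun t => C / ((t.+1)%:R * (t.+2)%:R)) C _ _).
- by apply: lee_nneseries => // i _ _; exact: measure_ge0.
- by move=> j; rewrite divr_ge0 // mulr_ge0.
- move=> N; rewrite -mulr_sumr tele_id ler_piMr // lerBlDr lerDl invr_ge0 ler0n.
Qed.

Lemma mEpair m i j : measurable (Epair m i j).
Proof. by apply: bigcap_measurableType => l _; exact: mK. Qed.

Definition Eu m j := \big[setU/set0]_(i < j.+1) Epair m i j.+1.

Lemma mEu m j : measurable (Eu m j).
Proof. by apply: bigsetU_measurable => i _; exact: mEpair. Qed.

Lemma P_Eu m j :
  (P (Eu m j) <= ((j.+1)%:R * (law54 m ^+ 2 * L m ^+ j))%:E)%E.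
Proof.
apply: le_trans (Boole_inequality P (A := fun i => Epair m i j.+1) _) _.
  by move=> i _; exact: mEpair.
rewrite (eq_bigr (fun i : 'I_j.+1 => (law54 m ^+ 2 * L m ^+ j)%:E)).
  by rewrite sumEFin sumr_const card_ord mulr_natl.
by move=> i _ /=; rewrite P_Epair.
Qed.

Definition Gm m := \bigcup_j Eu m j.

Lemma mGm m : measurable (Gm m).
Proof. by apply: bigcup_measurable => j _; exact: mEu. Qed.

Lemma P_Gm m : (0 < m)%N -> (P (Gm m) <= (16%:R / (m%:R ^+ 2))%:E)%E.
Proof.
move=> m0.
have hs := @tail m m0.
have c0 := c_gt0.
have rpos : 0 < r (2 * m) by rewrite r_gt0 // muln_gt0.
have s0 : 0 < m%:R * r (2 * m) / c by rewrite divr_gt0 // mulr_gt0 // ltr0n.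
have L2 := L_le1 (2 * m).
have Lm0 := L_ge0 m.
have q1 : L m < 1 by lra.
have la : law54 m <= 4%:R / m%:R * (m%:R * r (2 * m) / c).
  have hm : m%:R != 0 :> R by rewrite pnatr_eq0 -lt0n.
  have hc : c != 0 by rewrite gt_eqF.
  rewrite lawE // (_ : 4%:R / m%:R * _ = 4%:R * r (2 * m) / c); last by field; rewrite hc hm.
  by rewrite ler_wpM2r ?invr_ge0 ?(ltW c0) //; exact: r2.
have la0 : 0 <= law54 m :> R by exact: law_ge0.
have rat : law54 m / (1 - L m) <= 4%:R / m%:R.
  rewrite ler_pdivrMr ?subr_gt0 //; apply: le_trans la _.
  by rewrite ler_wpM2l ?divr_ge0 ?ler0n //; lra.
have h1 : (P (Gm m) <= \sum_(j <oo) P (Eu m j))%E.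
  by apply: (measure_sigma_subadditive P (fun j => mEu m j) (mGm m)).
apply: le_trans h1 _.
apply: le_trans (lee_nneseries (v := fun j => ((j.+1)%:R * (law54 m ^+ 2 * L m ^+ j))%:E) _ _) _.
- by move=> i _ _; exact: measure_ge0.
- by move=> n _; exact: P_Eu.
apply: le_trans (@nneseries_le_C _ (law54 m ^+ 2 * ((1 - L m) ^+ 2)^-1) _ _) _.
- by move=> j; rewrite mulr_ge0 ?ler0n // mulr_ge0 ?exprn_ge0.
- move=> N; rewrite (eq_bigr (fun j : 'I_N => law54 m ^+ 2 * ((j.+1)%:R * L m ^+ j))).
    rewrite -mulr_sumr; apply: ler_wpM2l; first by rewrite exprn_ge0.
    by apply: geom_bound; rewrite Lm0.
  by move=> j _; rewrite mulrCA.
- rewrite lee_fin -expr_div_n (_ : 16%:R = 4%:R ^+ 2 :> R); last by rewrite expr2 -natrM.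
  rewrite -expr_div_n !expr2 ler_pM // divr_ge0 // subr_ge0 ltW //.
Qed.

Lemma bernoulli (s : R) m : 0 <= s <= 1 -> (1 - s) ^+ m * (1 + m%:R * s) <= 1.
Proof.
case/andP => s0 s1; elim: m => [|m IH]; first by rewrite expr0 mul0r addr0 mulr1.
have h0 : 0 <= (1 - s) ^+ m by rewrite exprn_ge0 // subr_ge0.
have hm : 0 <= m%:R :> R by rewrite ler0n.
have : (1 - s) ^+ m * ((1 - s) * (1 + (m.+1)%:R * s)) <= (1 - s) ^+ m * (1 + m%:R * s).
  rewrite ler_wpM2l // -nat1r; nra.
rewrite exprSr -mulrA; lra.
Qed.

Lemma pow_small (q s : R) m n : 0 <= q -> 0 < s -> q <= 1 - s -> (0 < m)%N -> (4 * m <= n)%N ->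
  q ^+ n <= ((m%:R * s) ^+ 4)^-1.
Proof.
move=> q0 s0 qs m0 mn.
have q1 : q <= 1 by lra.
have s1 : s <= 1 by lra.
apply: le_trans (ler_wiXn2l q0 q1 mn) _.
have hm : 0 < m%:R * s by rewrite mulr_gt0 // ltr0n.
have hb := @bernoulli s m; rewrite (ltW s0) s1 in hb; have {}hb := hb isT.
have h1 : q ^+ m <= (1 - s) ^+ m by rewrite lerXn2r ?nnegrE // subr_ge0.
rewrite mulnC exprM -exprVn; apply: lerXn2r.
- by rewrite nnegrE exprn_ge0.
- by rewrite nnegrE invr_ge0 ltW.
rewrite -(ler_pM2l hm) mulfV ?gt_eqF //.
have h2 : 0 <= (1 - s) ^+ m by rewrite exprn_ge0 // subr_ge0.
have h4 : m%:R * s * q ^+ m <= m%:R * s * (1 - s) ^+ m by rewrite ler_wpM2l // ltW.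
nra.
Qed.

Lemma r4 k : (0 < k)%N -> r k ^+ 4 = ((k%:R : R) ^+ 5)^-1.
Proof.
move=> k0; rewrite rE exprVn; congr (_^-1).
rewrite -[LHS]powR_mulrn ?powR_ge0 // -powRrM divfK ?pnatr_eq0 //.
by rewrite powR_mulrn // ler0n.
Qed.

Definition Bn n := \bigcap_(l in [set` iota 0 n]) (K l @^-1` [set x | (x < n.+1)%N]).

Lemma mBn n : measurable (Bn n).
Proof. by apply: bigcap_measurableType => l _; exact: mK. Qed.

Lemma nat_bound t : ((t + 8).+1 * t.+1 * t.+2 <= 4096 * ((t + 8) %/ 4) ^ 4)%N.
Proof.
set m := ((t + 8) %/ 4)%N.
have h1 : (t + 8 < 4 * m + 4)%N by rewrite /m; lia.
have h2 : (2 <= m)%N by rewrite /m; lia.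
have a1 : (t.+1 <= 4 * m)%N by lia.
have a2 : (t.+2 <= 4 * m)%N by lia.
have a3 : ((t + 8).+1 <= 8 * m)%N by lia.
apply: (@leq_trans ((8 * m) * (4 * m) * (4 * m))).
  by rewrite !leq_mul.
have -> : (8 * m * (4 * m) * (4 * m) = 128 * m ^ 3)%N by rewrite !expnS expn0; ring.
have -> : (4096 * m ^ 4 = (32 * m) * (128 * m ^ 3))%N by rewrite !expnS expn0; ring.
by rewrite leq_pmull // muln_gt0 /=; lia.
Qed.

Lemma P_Bn t : (P (Bn (t + 8)) <=
  ((2 ^+ 17 * c ^+ 4) / ((t.+1)%:R * (t.+2)%:R))%:E)%E.
Proof.
set n := (t + 8)%N.
set M := n.+1.
set m := (n %/ 4)%N.
have c0 := c_gt0.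
have M0 : (0 < M)%N by [].
have m0 : (0 < m)%N by rewrite /m /n; lia.
have m4 : (4 * m <= n)%N by rewrite /m; lia.
have rpos : 0 < r (2 * M) by rewrite r_gt0 // muln_gt0.
set s := M%:R * r (2 * M) / c.
have s0 : 0 < s by rewrite divr_gt0 // mulr_gt0 // ltr0n.
have hs := @tail M M0.
have L2 := L_le1 (2 * M).
have qs : L M <= 1 - s by rewrite -/s in hs; lra.
rewrite /Bn P_allsmall lee_fin.
apply: le_trans (@pow_small (L M) s m n (L_ge0 M) s0 qs m0 m4) _.
have e : (m%:R * s) ^+ 4 = m%:R ^+ 4 / (32%:R * M%:R * c ^+ 4).
  rewrite /s !exprMn r4 ?muln_gt0 // natrM exprMn exprVn.
  have hM : M%:R != 0 :> R by rewrite pnatr_eq0.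
  have hc : c != 0 by rewrite gt_eqF.
  rewrite (_ : 32%:R = 2%:R ^+ 5 :> R); last by rewrite -natrX.
  by field; rewrite hM hc.
rewrite e invf_div.
have hR : M%:R * (t.+1)%:R * (t.+2)%:R <= 4096%:R * m%:R ^+ 4 :> R.
  by rewrite -!natrM -natrX -natrM ler_nat nat_bound.
have hm4 : 0 < m%:R ^+ 4 :> R by rewrite exprn_gt0 // ltr0n.
have ht : 0 < (t.+1)%:R * (t.+2)%:R :> R by rewrite mulr_gt0 // ltr0n.
rewrite ler_pdivrMr // (_ : _ / _ * _ = 2 ^+ 17 * c ^+ 4 * m%:R ^+ 4 / ((t.+1)%:R * (t.+2)%:R)); last by rewrite mulrAC.
rewrite ler_pdivlMr //.
have c4 : 0 <= 32%:R * c ^+ 4 by rewrite mulr_ge0 ?ler0n // exprn_ge0 // ltW.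
have := ler_wpM2l c4 hR.
rewrite (_ : 2 ^+ 17 = 32%:R * 4096%:R :> R); last by rewrite -natrM -natrX.
move=> h.
rewrite (_ : 32%:R * M%:R * c ^+ 4 * ((t.+1)%:R * (t.+2)%:R) =
  32%:R * c ^+ 4 * (M%:R * (t.+1)%:R * (t.+2)%:R)); last by ring.
rewrite (_ : 32%:R * 4096%:R * c ^+ 4 * m%:R ^+ 4 =
  32%:R * c ^+ 4 * (4096%:R * m%:R ^+ 4)) //; last by ring.
Qed.

Lemma mlimsup (F : nat -> set T) : (forall t, measurable (F t)) ->
  measurable (lim_sup_set F).
Proof.
move=> mF; apply: bigcapT_measurable => n.
by apply: bigcup_measurable => k _; exact: mF.
Qed.

Lemma eventually_not (F : nat -> set T) w : ~ lim_sup_set F w ->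
  exists t0, forall t, (t0 <= t)%N -> ~ F t w.
Proof.
move=> nF; have /existsNP [n hn] : ~ (forall n, (\bigcup_(j in [set j | (n <= j)%N]) F j) w).
  by move=> h; apply: nF => n _; exact: h.
by exists n => t nt Ft; apply: hn; exists t.
Qed.

Lemma P_G t : (P (Gm t.+1) <= (32%:R / ((t.+1)%:R * (t.+2)%:R))%:E)%E.
Proof.
apply: le_trans (@P_Gm t.+1 (ltn0Sn t)) _; rewrite lee_fin.
have h1 : 0 < (t.+1)%:R :> R by rewrite ltr0n.
have h2 : 0 < (t.+2)%:R :> R by rewrite ltr0n.
rewrite ler_pdivrMr ?exprn_gt0 // mulrAC ler_pdivlMr ?mulr_gt0 //.
rewrite expr2 -[(t.+2)%:R]natr1.
have h3 : 1 <= (t.+1)%:R :> R by rewrite ler1n.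
nra.
Qed.

Lemma main_ae : {ae P, forall w,
    exists i0 : nat,
      (forall i, (i0 <= i)%N -> record_time (fun j => K j w) i ->
                 simple_record_time (fun j => K j w) i) /\
      (forall i, (i0 <= i)%N -> (i.+1 < \max_(j < i.+1) K j w)%N)}.
Proof.
pose G t := Gm t.+1.
pose F t := Bn (t + 8).
have mG : forall t, measurable (G t) by move=> t; exact: mGm.
have mF : forall t, measurable (F t) by move=> t; exact: mBn.
have hG : P (lim_sup_set G) = 0.
  apply: lim_sup_set_cvg0 => //; apply: (@BC_finite G 32%:R) => //; exact: P_G.
have hF : P (lim_sup_set F) = 0.
  apply: lim_sup_set_cvg0 => //; apply: (@BC_finite F (2 ^+ 17 * c ^+ 4)).
  - by rewrite mulr_ge0 // exprn_ge0 // ltW // c_gt0.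
  - exact: P_Bn.
exists (lim_sup_set G `|` lim_sup_set F); split.
- by apply: measurableU; exact: mlimsup.
- apply/eqP; rewrite eq_le measure_ge0 andbT.
  apply: le_trans (measureU2 P (@mlimsup G mG) (@mlimsup F mF)) _.
  have hG1 : (P : {content set T -> \bar R}) (lim_sup_set G) = 0 := hG.
  have hF1 : (P : {content set T -> \bar R}) (lim_sup_set F) = 0 := hF.
  by rewrite hG1 hF1 adde0.
move=> w /= nQ; case: (pselect ((lim_sup_set G `|` lim_sup_set F) w)) => // nA.
exfalso; apply: nQ.
move/not_orP: nA => [/eventually_not [t0 ht0] /eventually_not [t1 ht1]].
have part2 : forall i, (t1 + 7 <= i)%N -> (i.+1 < \max_(j < i.+1) K j w)%N.
  move=> i hi.
  have /existsNP [l hl] : ~ (forall l, [set` iota 0 (i - 7 + 8)%N] l ->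
      (K l w < (i - 7 + 8).+1)%N).
    move=> h; have hh : (t1 <= i - 7)%N by lia.
    have := ht1 (i - 7)%N hh; rewrite /F /Bn; apply => l hl; exact: h.
  move/not_implyP: hl => [hl1 /negP hl2].
  rewrite /= mem_iota add0n in hl1.
  have hli : (l < i.+1)%N by lia.
  apply: leq_trans (leq_bigmax (F := fun j : 'I_i.+1 => K j w) (Ordinal hli)).
  by rewrite /=; lia.
exists (maxn t0.+2 (t1 + 9)); split; last first.
  by move=> i hi; apply: part2; lia.
move=> i hi rec; split => // j ij nsr.
rewrite ltnNge; apply/negP => hji.
have hij : (K i w <= K j w)%N by exact: nsr.
set v := K i w.
have Kj : K j w = v by apply/eqP; rewrite eqn_leq hji hij.
have hmax : (\max_(l < i) K l w <= v)%N.
  by apply/bigmax_leqP => l _; apply: ltnW; exact: rec.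
have hiv : (i < v)%N.
  have := part2 i.-1; rewrite prednK; last by lia.
  by move=> /(_ ltac:(lia)) h; exact: leq_trans h hmax.
have ex : exists l, (i < l)%N && (K l w == v) by exists j; rewrite ij Kj eqxx.
case: (ex_minnP ex) => js /andP[ijs /eqP Kjs] jsmin.
apply: (ht0 v.-1); first by lia.
rewrite /G prednK; last by lia.
exists js.-1 => //.
rewrite /Eu -(bigcup_mkord _ (fun k => Epair v k js.-1.+1)) prednK; last by lia.
exists i => //=.
move=> l hl0; have : l \in iota 0 js.+1 := hl0.
rewrite mem_iota add0n => /andP[_ hl].
rewrite /Apair; case: ifP => [/eqP -> //|li].
case: ifP => [/eqP -> //|ljs] /=.
have hl' : (l < js)%N by rewrite ltn_neqAle ljs -ltnS.
case: (ltngtP l i) => [lti|gti|eqi]; last by rewrite eqi eqxx in li.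
- exact: rec.
- have hlj : (l < j)%N.
    apply: leq_trans hl' _; apply: jsmin; by rewrite ij Kj eqxx.
  have : (K l w <= v)%N by rewrite -Kj; exact: nsr.
  rewrite leq_eqVlt => /orP[/eqP Klv|//].
  have := jsmin l; rewrite gti Klv eqxx /= => /(_ isT); lia.
Qed.

End S.

Theorem mainTheorem5 (R : realType) (d : measure_display) (T : measurableType d)
  (P : probability T R) (K : nat -> T -> nat)
  (HKmeas : forall i, measurable_fun setT (K i))
  (Hindep : mutually_independent P K)
  (Hlaw : forall i k, P (K i @^-1` [set k]) = (law54 k)%:E) :
  {ae P, forall w,
    exists i0 : nat,
      (forall i, (i0 <= i)%N -> record_time (fun j => K j w) i ->
                 simple_record_time (fun j => K j w) i) /\
      (forall i, (i0 <= i)%N -> (i.+1 < \max_(j < i.+1) K j w)%N)}.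
Proof. exact: (@main_ae R d T P K HKmeas Hindep Hlaw). Qed.
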